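(* Let $(E\xrightarrow{Q}K,\gamma)$ be a projected cone with dual projected cone $(F\xrightarrow{P}N,\delta)$, let $\gamma_0\preceq\gamma$ be a face and $\delta_0:=\gamma_0^{*}$. Then the following are equivalent: (i) $P$ maps $\mathrm{lin}(\delta_0)\cap F$ onto $N$; (ii) $Q$ maps $\mathrm{lin}(\gamma_0)\cap E$ isomorphically onto a primitive sublattice of $K$.
   Context: Lattices are finitely generated free abelian groups, $E_{\mathbb Q}:=\mathbb Q\otimes E$; $\mathrm{lin}$ denotes linear span; a sublattice $K_0\subset K$ is primitive if $K/K_0$ is torsion free. A projected cone $(E\xrightarrow{Q}K,\gamma)$ is a surjective lattice homomorphism $Q\colon E\to K$ with a simplicial full-dimensional convex polyhedral cone $\gamma\subset E_{\mathbb Q}$. Its dual projected cone $(F\xrightarrow{P}N,\delta)$: $M:=\ker Q$, $F:=\mathrm{Hom}(E,\mathbb Z)$, $N:=\mathrm{Hom}(M,\mathbb Z)$, $P\colon F\to N$ restriction, $\delta:=\gamma^\vee$. For $\gamma_0\preceq\gamma$, $\gamma_0^*:=\gamma_0^\perp\cap\delta$. *)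

(* Defs.v *)
(* Coordinate model: E = Z^n (integer column vectors),
   K = Z^k, Q : E -> K an integer k x n matrix, F = Hom(E,Z) = integer row
   vectors with the pairing f *m x, E_Q = rat column vectors. *)
From mathcomp Require Import all_boot all_order all_algebra.
Set Implicit Arguments. Unset Strict Implicit. Unset Printing Implicit Defensive.
Import GRing.Theory Num.Theory.
Local Open Scope ring_scope.

Definition intcv n (x : 'cV[int]_n) : 'cV[rat]_n := map_mx (fun z : int => z%:~R) x.
Definition intrv n (f : 'rV[int]_n) : 'rV[rat]_n := map_mx (fun z : int => z%:~R) f.

Definition pairQ n (u : 'rV[rat]_n) (x : 'cV[rat]_n) : rat := (u *m x) 0 0.
Definition pairZ n (f : 'rV[int]_n) (x : 'cV[int]_n) : int := (f *m x) 0 0.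

(* simplicial full-dimensional cone generated by the columns of B
   (B invertible is required separately) *)
Definition simplicial_cone n (B : 'M[rat]_n) : 'cV[rat]_n -> Prop :=
  fun x => exists c : 'cV[rat]_n, (forall i, 0 <= c i 0) /\ x = B *m c.

Definition dual_cone n (g : 'cV[rat]_n -> Prop) : 'rV[rat]_n -> Prop :=
  fun u => forall x, g x -> 0 <= pairQ u x.

Definition is_face n (g g0 : 'cV[rat]_n -> Prop) : Prop :=
  exists u, dual_cone g u /\ forall x, g0 x <-> (g x /\ pairQ u x = 0).

Definition face_star n (g g0 : 'cV[rat]_n -> Prop) : 'rV[rat]_n -> Prop :=
  fun u => dual_cone g u /\ forall x, g0 x -> pairQ u x = 0.

Definition lin (V : lmodType rat) (S : V -> Prop) : V -> Prop :=
  fun x => exists (m : nat) (c : 'I_m -> rat) (v : 'I_m -> V),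
    (forall i, S (v i)) /\ x = \sum_(i < m) c i *: v i.

(* a sublattice L of Z^k is primitive iff Z^k / L is torsion free *)
Definition primitive k (L : 'cV[int]_k -> Prop) : Prop :=
  forall (y : 'cV[int]_k) (m : int), m != 0 -> L (m *: y) -> L y.

(* Main.v *)
Require Import Defs.
From mathcomp Require Import all_boot all_order all_algebra zify.
Import GRing.Theory Num.Theory.
Local Open Scope ring_scope.

Notation iM A := (map_mx (fun z : int => (z%:~R : rat)) A).

Lemma intcvD n (x y : 'cV[int]_n) : intcv (x + y) = intcv x + intcv y.
Proof. by rewrite /intcv map_mxD. Qed.
Lemma intcvB n (x y : 'cV[int]_n) : intcv (x - y) = intcv x - intcv y.
Proof. by rewrite /intcv map_mxB. Qed.
Lemma intcvZ n (m : int) (x : 'cV[int]_n) : intcv (m *: x) = m%:~R *: intcv x.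
Proof. by apply/matrixP=> i j; rewrite !mxE intrM. Qed.
Lemma intcvM k n (Q : 'M[int]_(k,n)) x : intcv (Q *m x) = iM Q *m intcv x.
Proof. by rewrite /intcv map_mxM. Qed.
Lemma intcv0 n : intcv (0 : 'cV[int]_n) = 0.
Proof. by apply/matrixP=> i j; rewrite !mxE. Qed.
Lemma intcv_inj n : injective (@intcv n).
Proof.
move=> x y H; apply/matrixP=> i j.
by have := congr1 (fun A : 'cV[rat]_n => A i j) H; rewrite !mxE => /intr_inj.
Qed.
Lemma pairZQ n (f : 'rV[int]_n) x : (pairZ f x)%:~R = pairQ (intrv f) (intcv x).
Proof. rewrite /pairZ /pairQ /intrv /intcv. rewrite -map_mxM. rewrite [RHS]mxE. done. Qed.
Lemma pairZD n (f : 'rV[int]_n) x y : pairZ f (x + y) = pairZ f x + pairZ f y.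
Proof. by rewrite /pairZ mulmxDr mxE. Qed.
Lemma pairZB n (f : 'rV[int]_n) x y : pairZ f (x - y) = pairZ f x - pairZ f y.
Proof. by rewrite /pairZ mulmxBr !mxE. Qed.
Lemma pairZZ n (f : 'rV[int]_n) m x : pairZ f (m *: x) = m * pairZ f x.
Proof. by rewrite /pairZ -scalemxAr mxE. Qed.

Lemma lin_scale (V : lmodType rat) (S : V -> Prop) r x : lin S x -> lin S (r *: x).
Proof.
move=> [m [c [v [Hv ->]]]]; exists m, (fun i => r * c i), v; split=> //.
by rewrite scaler_sumr; apply: eq_bigr => i _; rewrite scalerA.
Qed.

Lemma lin_pair n (g g0 : 'cV[rat]_n -> Prop) u x :
  lin g0 x -> lin (face_star g g0) u -> pairQ u x = 0.
Proof.
move=> [m [c [v [Hv ->]]]] [m' [c' [v' [Hv' ->]]]].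
rewrite /pairQ mulmx_suml big1 ?mxE // => i _.
rewrite -scalemxAl mulmx_sumr big1 ?scaler0 // => j _.
rewrite -scalemxAr; have [_ H] := Hv' i.
suff -> : v' i *m v j = 0 by rewrite scaler0.
apply/matrixP=> a b; rewrite !ord1 [RHS]mxE; exact: H _ (Hv j).
Qed.

Lemma pairQ0 n (x : 'cV[rat]_n) : pairQ 0 x = 0.
Proof. by rewrite /pairQ mul0mx mxE. Qed.

Lemma pair_rowinv n (B : 'M[rat]_n) j c : B \in unitmx ->
  pairQ (row j (invmx B)) (B *m c) = c j 0.
Proof.
move=> HB; rewrite /pairQ mulmxA -row_mul mulVmx // row1 -rowE mxE //.
Qed.

Lemma cone_col n (B : 'M[rat]_n) j : simplicial_cone B (col j B).
Proof.
exists (delta_mx j 0); split; last exact: colE.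
by move=> i; rewrite mxE; case: (_ && _).
Qed.

Lemma face_data n (B : 'M[rat]_n) g0 : B \in unitmx ->
  is_face (simplicial_cone B) g0 ->
  exists CW : 'M[rat]_n,
   (forall y : 'cV[rat]_n, lin g0 (CW *m y)) /\
   (forall f : 'rV[rat]_n, f *m CW = 0 -> lin (face_star (simplicial_cone B) g0) f).
Proof.
move=> HB [u [Hdual Hface]].
pose a := u *m B.
have aE j : a 0 j = pairQ u (col j B).
  by rewrite /pairQ colE mulmxA -colE [RHS]mxE.
have a_ge0 j : 0 <= a 0 j by rewrite aE; apply: Hdual; exact: cone_col.
have g00 : g0 0.
  apply/Hface; split; last by rewrite /pairQ mulmx0 mxE.
  exists 0; split; [by move=> i; rewrite mxE | by rewrite mulmx0].
have g0col j : a 0 j = 0 -> g0 (col j B).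
  by move=> H; apply/Hface; split; [exact: cone_col | rewrite -aE].
have aB : u *m B = a by [].
clearbody a.
pose CW := \matrix_(i, j) (if a 0 j == 0 then B i j else 0).
exists CW; split.
  move=> y; exists n, (fun j => y j 0), (fun j => col j CW); split.
    move=> j; case: (eqVneq (a 0 j) 0) => Ha.
      suff -> : col j CW = col j B by exact: g0col.
      by apply/matrixP=> i k; rewrite !mxE Ha eqxx.
    suff -> : col j CW = 0 by [].
    by apply/matrixP=> i k; rewrite !mxE (negbTE Ha).
  rewrite {1}[y]matrix_sum_delta mulmx_sumr; apply: eq_bigr => j _.
  by rewrite big_ord1 -scalemxAr -colE.
move=> f Hf.
pose v j := if a 0 j == 0 then 0 else row j (invmx B).
exists n, (fun j => (f *m B) 0 j), v; split.
  move=> j; rewrite /v; case: (eqVneq (a 0 j) 0) => Ha.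
    by split; [move=> x _; rewrite pairQ0 | move=> x _; exact: pairQ0].
  split.
    by move=> x [c [Hc ->]]; rewrite pair_rowinv.
  move=> x /Hface [[c [Hc Hx]] Hu].
  rewrite Hx pair_rowinv //.
  move: Hu; rewrite Hx /pairQ mulmxA aB mxE => Hu.
  have Hn : forall i : 'I_n, xpredT i -> 0 <= a 0 i * c i 0.
    by move=> i _; rewrite mulr_ge0.
  by have := @psumr_eq0P _ _ xpredT (fun i => a 0 i * c i 0) Hn Hu j isT;
    move/eqP; rewrite mulf_eq0 (negbTE Ha) /= => /eqP.
rewrite {1}(_ : f = (f *m B) *m invmx B); last by rewrite mulmxK.
rewrite {1}[f *m B]row_sum_delta mulmx_suml; apply: eq_bigr => j _.
rewrite -scalemxAl -rowE /v; case: (eqVneq (a 0 j) 0) => Ha //.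
suff -> : (f *m B) 0 j = 0 by rewrite !scale0r.
have := congr1 (fun M : 'rV[rat]_n => M 0 j) Hf; rewrite mxE [X in _ = X]mxE => <-.
by rewrite mxE; apply: eq_bigr => i _; rewrite mxE Ha eqxx.
Qed.



Lemma solve_int p r (C : 'M[int]_(p,r)) (v : 'rV[rat]_r) :
  (forall y : 'cV[rat]_r, (exists z, iM C *m y = intcv z) ->
     exists z : int, (v *m y) 0 0 = z%:~R) ->
  exists g : 'rV[int]_p, intrv g *m iM C = v.
Proof.
move=> H.
case: (int_Smith_normal_form C) => L HL [R HR [d _ HC]].
set D := \matrix_(i, j) _ in HC.
pose Ri := invmx R.
have iRRi : iM R *m iM Ri = 1%:M by rewrite -map_mxM mulmxV // map_mx1.
have iRiR : iM Ri *m iM R = 1%:M by rewrite -map_mxM mulVmx // map_mx1.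
pose w := v *m iM Ri.
have CRi : iM C *m iM Ri = iM L *m iM D.
  by rewrite HC !map_mxM -mulmxA iRRi mulmx1.
have Cy j (s : rat) : iM C *m (iM Ri *m (s *: delta_mx j (0:'I_1))) =
    s *: (iM L *m (iM D *m delta_mx j (0:'I_1))).
  by rewrite mulmxA CRi -scalemxAr mulmxA.
have vy j (s : rat) : (v *m (iM Ri *m (s *: delta_mx j (0:'I_1)))) 0 0 = s * w 0 j.
  by rewrite -scalemxAr -scalemxAr mxE mulmxA -colE [in LHS]mxE.
have colD j i : (iM D *m delta_mx j (0:'I_1)) i 0 = (d`_i *+ ((i : nat) == j))%:~R.
  by rewrite -colE !mxE.
have A (j : 'I_r) : if ((j < p)%N && (d`_j != 0)) then exists z : int, w 0 j = z%:~R * (d`_j)%:~R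
           else w 0 j = 0.
  case: ifP => Hj.
    case/andP: Hj => jp dj; pose i0 : 'I_p := Ordinal jp.
    have dj' : (d`_j)%:~R != 0 :> rat by rewrite intr_eq0.
    have [|z Hz] := H (iM Ri *m (((d`_j)%:~R)^-1 *: delta_mx j (0:'I_1))).
      exists (L *m delta_mx i0 (0:'I_1)).
      rewrite Cy intcvM scalemxAr; congr (_ *m _).
      apply/matrixP=> i k; rewrite ord1 [LHS]mxE colD /intcv !mxE.
      have -> : ((i : nat) == j) = (i == i0) by [].
      by case: (eqVneq i i0) => [->|_] /=; rewrite ?mulr0n ?mulr0 ?mulr1n ?mulVf.
    exists z; rewrite vy in Hz; rewrite -Hz mulrAC mulVf // mul1r //.
  apply/eqP/negP => /negP wj.
  have colD0 : iM D *m delta_mx j (0:'I_1) = 0.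
    apply/matrixP=> i k; rewrite ord1 colD mxE.
    case: (eqVneq (i : nat) j) => [Eij|] //=.
    have : (j < p)%N by rewrite -Eij.
    by move=> jp; move: Hj; rewrite jp /= Eij => /negbFE/eqP ->.
  have [|z Hz] := H (iM Ri *m ((2 * w 0 j)^-1 *: delta_mx j (0:'I_1))).
    by exists 0; rewrite Cy colD0 mulmx0 scaler0; apply/matrixP=> i k; rewrite !mxE.
  rewrite vy invfM -mulrA mulVf // mulr1 in Hz.
  have : (1 : rat) = (2 * z)%:~R by rewrite intrM -Hz mulfV.
  move/(congr1 numq); rewrite numq_int => /= E.
  have E1 : numq 1 = 1 by [].
  rewrite E1 in E; lia.
have wE : v *m iM Ri = w by [].
clearbody w.
pose h : 'rV[int]_p := \row_(i < p)
  (if insub (i : nat) is Some j then numq (w 0 j / (d`_i)%:~R) else 0).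
have hD : intrv h *m iM D = w.
  apply/matrixP=> k j; rewrite ord1 mxE.
  case: (ltnP j p) => jp.
    pose i0 : 'I_p := Ordinal jp.
    rewrite (bigD1 i0) //= big1 ?addr0; last first.
      move=> i Hi; rewrite !mxE.
      have -> : ((i : nat) == j) = (i == i0) by [].
      by rewrite (negbTE Hi) mulr0.
    have Hins : insub (i0 : nat) = Some j by rewrite -valK.
    rewrite !mxE Hins /= eqxx mulr1n.
    have := A j; rewrite jp /=.
    case: (eqVneq d`_j 0) => [->|dj] /=; first by rewrite mulr0 => ->.
    move=> [z ->]; rewrite mulfK ?intr_eq0 //.
    by rewrite numq_int.
  rewrite big1; last first.
    move=> i _; rewrite !mxE.
    have -> : ((i : nat) == j) = false by apply/negbTE; rewrite neq_ltn (leq_trans (ltn_ord i) jp).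
    by rewrite mulr0.
  by have := A j; rewrite ltnNge jp /= => ->.
exists (h *m invmx L).
rewrite /intrv HC -!map_mxM !mulmxA mulmxKV // !map_mxM.
by rewrite hD -wE -mulmxA iRiR mulmx1.
Qed.

Lemma scaleK_rat p q (a : rat) (A B : 'M[rat]_(p,q)) : a != 0 -> a *: A = a *: B -> A = B.
Proof. by move=> Ha H; rewrite -(scalerK Ha A) H scalerK. Qed.

Lemma clear_den p q (A : 'M[rat]_(p,q)) :
  exists (m : int) (A' : 'M[int]_(p,q)), 0 < m /\ m%:~R *: A = iM A'.
Proof.
pose m := \prod_(ij : 'I_p * 'I_q) denq (A ij.1 ij.2).
exists m, (\matrix_(i, j) (numq (A i j) *
   \prod_(ij : 'I_p * 'I_q | ij != (i, j)) denq (A ij.1 ij.2))).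
split; first by apply: prodr_gt0 => ij _; exact: denq_gt0.
apply/matrixP=> i j; rewrite !mxE /m (bigD1 (i, j)) //= intrM intrM.
by rewrite mulrC mulrA -numqE mulrC.
Qed.

Lemma solve_rat p r (C : 'M[rat]_(p,r)) (v : 'rV[rat]_r) :
  (forall y : 'cV[rat]_r, (exists z, C *m y = intcv z) ->
     exists z : int, (v *m y) 0 0 = z%:~R) ->
  exists g : 'rV[int]_p, intrv g *m C = v.
Proof.
move=> H; have [m [C' [m0 HC]]] := @clear_den _ _ C.
have m0' : (m%:~R : rat) != 0 by rewrite intr_eq0 lt0r_neq0.
have [|g Hg] := @solve_int p r C' (m%:~R *: v).
  move=> y [z Hz]; have [|z' Hz'] := H (m%:~R *: y).
    by exists z; rewrite -scalemxAr scalemxAl HC.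
  by exists z'; rewrite -scalemxAl scalemxAr.
exists g; apply: (@scaleK_rat _ _ _ _ _ m0'); by rewrite scalemxAr HC.
Qed.

Lemma additive_lin n (psi : 'cV[int]_n -> int) :
  (forall x y, psi (x + y) = psi x + psi y) ->
  forall x, psi x = pairZ (\row_i psi (delta_mx i (0:'I_1))) x.
Proof.
move=> H.
have psi0 : psi 0 = 0 by apply: (addrI (psi 0)); rewrite [RHS]addr0 -H addr0.
have psiN v : psi (- v) = - psi v by apply: (addrI (psi v)); rewrite -H !subrr psi0.
have psiMn v k : psi (v *+ k) = psi v *+ k.
  by elim: k => [|k IH]; rewrite ?mulr0n ?psi0 // !mulrS H IH.
have psiZ v (z : int) : psi (z *: v) = z * psi v.
  case: z => k; first by rewrite -natz scaler_nat psiMn mulr_natl.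
  by rewrite NegzE scaleNr psiN -natz scaler_nat psiMn mulNr mulr_natl.
move=> x; rewrite {1}[x]matrix_sum_delta (big_morph psi H psi0).
rewrite /pairZ mxE; apply: eq_bigr => i _.
by rewrite big_ord1 psiZ !mxE mulrC.
Qed.

Theorem lemma3p7 (n k : nat) (Q : 'M[int]_(k, n)) (B : 'M[rat]_n)
    (gamma0 : 'cV[rat]_n -> Prop) :
  (* Q : E -> K surjective *)
  (forall y : 'cV[int]_k, exists x : 'cV[int]_n, Q *m x = y) ->
  (* gamma simplicial full-dimensional *)
  B \in unitmx ->
  is_face (simplicial_cone B) gamma0 ->
  let gamma := simplicial_cone B in
  let delta0 := face_star gamma gamma0 in
  (* M = ker Q *)
  let M := fun x : 'cV[int]_n => Q *m x = 0 in
  (* lin(gamma0) \cap E *)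
  let L := fun x : 'cV[int]_n => lin gamma0 (intcv x) in
  ((* (i) every phi in N = Hom(M,Z) is P(f) for some f in lin(delta0) \cap F *)
   (forall phi : 'cV[int]_n -> int,
      (forall x y, M x -> M y -> phi (x + y) = phi x + phi y) ->
      exists f : 'rV[int]_n, lin delta0 (intrv f) /\
        (forall x, M x -> pairZ f x = phi x))
   <->
   (* (ii) Q is injective on L and Q(L) is primitive in K *)
   ((forall x y, L x -> L y -> Q *m x = Q *m y -> x = y) /\
    primitive (fun z : 'cV[int]_k => exists x, L x /\ Q *m x = z))).
Proof.
move=> Hsurj HB Hface gamma delta0 M L.
have [CW [HCW1 HCW2]] := @face_data _ _ _ HB Hface.
have vanish f x : lin delta0 (intrv f) -> L x -> pairZ f x = 0.
  move=> Hf Hx; apply: (@intr_inj rat); rewrite pairZQ.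
  exact: (@lin_pair _ _ _ _ _ Hx Hf).
split.
  move=> Hi.
  have coord w i : M w -> exists f, lin delta0 (intrv f) /\ pairZ f w = w i 0.
    move=> Mw; have [|f [Hf1 Hf2]] := Hi (fun v => v i 0).
      by move=> x y _ _; rewrite mxE.
    by exists f; split=> //; exact: Hf2.
  split.
    move=> x y Lx Ly Hxy; apply/matrixP=> i j; rewrite ord1.
    have Mw : M (x - y) by rewrite /M mulmxBr Hxy subrr.
    have [f [Hf1 Hf2]] := coord _ i Mw.
    move: Hf2; rewrite pairZB !vanish // subrr !mxE => /esym/eqP.
    by rewrite subr_eq0 => /eqP.
  move=> y m Hm [x [Lx Qx]].
  have [e He] := Hsurj y.
  pose w := x - m *: e.
  have Mw : M w by rewrite /M /w mulmxBr -scalemxAr He Qx subrr.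
  have dv i : (m %| w i ord0)%Z.
    have [f [Hf1 Hf2]] := coord _ i Mw.
    apply/dvdzP; exists (- pairZ f e).
    by rewrite -Hf2 /w pairZB pairZZ vanish // sub0r mulNr mulrC.
  pose w' := \col_i ((w i ord0) %/ m)%Z.
  have Hw' : m *: w' = w.
    apply/matrixP=> i j; rewrite ord1 [LHS]mxE [w' _ _]mxE mulrC divzK //.
  have Hx : m *: (e + w') = x by rewrite scalerDr Hw' /w addrC subrK.
  exists (e + w'); split.
    rewrite /L; have -> : intcv (e + w') = (m%:~R)^-1 *: intcv x.
      by rewrite -Hx intcvZ scalerA mulVf ?scale1r // intr_eq0.
    exact: lin_scale.
  rewrite mulmxDr He.
  suff -> : Q *m w' = 0 by rewrite addr0.
  have : m *: (Q *m w') = 0 by rewrite scalemxAr Hw'.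
  move=> H0; apply/matrixP=> i j; have := congr1 (fun A : 'cV[int]_k => A i j) H0.
  by rewrite !mxE => /eqP; rewrite mulf_eq0 (negbTE Hm) /= => /eqP.
move=> [Hinj Hprim] phi Hphi.
have exS (j : 'I_k) : exists x : 'cV[int]_n, Q *m x == delta_mx j 0.
  by have [x Hx] := Hsurj (delta_mx j 0); exists x; rewrite Hx.
pose SM : 'M[int]_(n, k) := \matrix_(i, j) (xchoose (exS j)) i 0.
have QSM : Q *m SM = 1%:M.
  apply/matrixP=> a b.
  have := eqP (xchooseP (exS b)) => Hb.
  have := congr1 (fun A : 'cV[int]_k => A a 0) Hb.
  rewrite [X in X = _ -> _]mxE [X in _ = X -> _]mxE andbT => E.
  rewrite [RHS]mxE -E mxE; apply: eq_bigr => i _; by rewrite mxE.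
pose pi (x : 'cV[int]_n) := x - SM *m (Q *m x).
have Mpi (x : 'cV[int]_n) : M (pi x).
  by rewrite /M /pi mulmxBr (mulmxA Q SM) QSM mul1mx subrr.
pose psi (x : 'cV[int]_n) := phi (pi x).
have psiD x y : psi (x + y) = psi x + psi y.
  rewrite /psi -Hphi //; congr phi.
  by rewrite /pi !mulmxDr opprD addrACA.
pose p : 'rV[int]_n := \row_i psi (delta_mx i (0:'I_1)).
have Hp x : M x -> pairZ p x = phi x.
  move=> Mx; rewrite -(@additive_lin _ _ psiD) /psi /pi.
  by move: Mx; rewrite /M => ->; rewrite mulmx0 subr0.
have [|t Ht] := @solve_rat k n (iM Q *m CW) (intrv p *m CW).
  move=> y [z Hz].
  have Lb := HCW1 y.
  have [m [bb [m0 Hbb]]] := @clear_den n 1 (CW *m y).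
  have m0' : m != 0 by rewrite lt0r_neq0.
  have m0r : (m%:~R : rat) != 0 by rewrite intr_eq0.
  have Lbb : L bb by rewrite /L /intcv -Hbb; exact: lin_scale.
  have Qbb : Q *m bb = m *: z.
    apply: intcv_inj; rewrite intcvM {1}/intcv -Hbb intcvZ -Hz.
    by rewrite -scalemxAr mulmxA.
  have [|l [Ll Ql]] := Hprim z m m0'.
    by exists bb; split.
  have Hl : m *: l = bb.
    apply: Hinj => //; last by rewrite -scalemxAr Ql Qbb.
    by rewrite /L intcvZ; exact: lin_scale.
  have Hb : CW *m y = intcv l.
    apply: (@scaleK_rat _ _ _ _ _ m0r); by rewrite Hbb -Hl -intcvZ.
  by exists (pairZ p l); rewrite -mulmxA Hb pairZQ.
exists (p - t *m Q); split.
  apply: HCW2.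
  rewrite /intrv map_mxB map_mxM mulmxBl -mulmxA.
  by rewrite [X in _ - X]Ht subrr.
move=> x Mx; rewrite /pairZ mulmxBl -mulmxA Mx mulmx0 subr0.
exact: Hp.
Qed.
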